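(* Let $q$ be a prime power and $\lambda\in(0,1)$ be such that $\lambda q$ is a positive integer. Then there exists a coded caching scheme with linear subpacketization $F=K$, where the number of users satisfies $K\le \frac{q^{2\lambda^2q^2}}{(\lambda q)!}$, with cache fraction $\frac{M}{N}\le\lambda$ and global caching gain $\gamma\ge\frac{4^{\lambda q}}{2\sqrt{\lambda q}}$ (the rate being $R=K(1-\frac{M}{N})/\gamma$).
   Context: Coded caching setup: a server holds $N$ files $W_1,\dots,W_N$ and is connected by an error-free broadcast link to $K$ users, each having a cache able to store $M$ files; it is assumed throughout that $N\ge K$. Each file is split into $F$ equal-size subfiles ($F$ is the subpacketization). Caching is done before demands are known and is symmetric: for every user and subfile index $f$, the user caches the $f$-th subfile of either all files or none. In the delivery phase every user demands one file and the server broadcasts transmissions, each of the size of one subfile, so that every user can recover its demanded file from its cache and the transmissions, for every demand vector. The rate $R$ is the number of transmissions divided by $F$, and the global caching gain is $\gamma=K(1-M/N)/R$. *)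

(* Defs.v *)
From HB Require Import structures.
From mathcomp Require Import all_boot all_order all_algebra.
From mathcomp Require Import Rstruct.
From Stdlib Require Rdefinitions.
Notation R := Rdefinitions.R.
Set Implicit Arguments. Unset Strict Implicit. Unset Printing Implicit Defensive.
Import Order.TTheory GRing.Theory Num.Theory.

Definition prime_power (q : nat) : Prop :=
  exists p e : nat, prime p /\ (0 < e)%N /\ q = (p ^ e)%N.

(* A library of N files, each split into F subfiles whose contents lie in
   a finite alphabet A (a subfile = one symbol of A): W n f = f-th subfile
   of file n. *)
Definition library (N F : nat) (A : Type) := 'I_N -> 'I_F -> A.

(* Symmetric placement: Z k is the set of subfile indices f such that user k
   caches the f-th subfile of every file. *)
Definition same_cache (N F K : nat) (A : Type) (Z : 'I_K -> {set 'I_F})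
  (k : 'I_K) (W W' : library N F A) : Prop :=
  forall (n : 'I_N) (f : 'I_F), f \in Z k -> W n f = W' n f.

(* A delivery scheme with T transmissions, each of the size of one subfile
   (an element of A), for placement Z: for every demand vector d, the
   transmissions X d j are arbitrary functions of the library, and every
   user k can recover its demanded file W (d k) from its cache and the
   transmissions, i.e. W (d k) is a function of (cache of k, transmissions). *)
Definition valid_delivery (N F K T : nat) (A : Type) (Z : 'I_K -> {set 'I_F})
  (X : ('I_K -> 'I_N) -> 'I_T -> library N F A -> A) : Prop :=
  forall (d : 'I_K -> 'I_N) (k : 'I_K) (W W' : library N F A),
    same_cache Z k W W' ->
    (forall j : 'I_T, X d j W = X d j W') ->
    forall f : 'I_F, W (d k) f = W' (d k) f.

Definition caching_scheme (K F T : nat) (Z : 'I_K -> {set 'I_F}) : Prop :=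
  forall (N : nat) (A : finType), (K <= N)%N ->
    exists X : ('I_K -> 'I_N) -> 'I_T -> library N F A -> A,
      valid_delivery Z X.

Definition cache_fraction_ok (K F : nat) (Z : 'I_K -> {set 'I_F}) (mu : R) :=
  forall k : 'I_K, (#|Z k|%:R <= mu * F%:R)%R.

Definition rate (F T : nat) : R := (T%:R / F%:R)%R.
Definition gain (K F T : nat) (mu : R) : R := (K%:R * (1 - mu) / rate F T)%R.

(* Main.v *)
Require Import Defs.
From HB Require Import structures.
From mathcomp Require Import all_boot all_order all_algebra.
From mathcomp Require Import Rstruct.
From mathcomp Require Import zify ring lra.
Set Implicit Arguments. Unset Strict Implicit. Unset Printing Implicit Defensive.
Import Order.TTheory GRing.Theory Num.Theory.

Lemma bin_cov a b k : ('C(a+b, k.+1) <= 'C(a,k.+1) + b * 'C((a+b).-1, k))%N.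
Proof.
elim: b => [|b IH]; first by rewrite addn0 mul0n addn0.
rewrite addnS binS /=.
have h1 : ('C((a+b).-1, k) <= 'C(a+b, k))%N by apply: leq_bin2l; apply: leq_pred.
rewrite mulSn. nia.
Qed.

Lemma bin_mid n m : ((2 * m) <= n)%N -> ('C(n,m)* 'C(n-m,m) = 'C(n,(2 * m))* 'C((2 * m),m))%N.
Proof.
move=> h.
have P0 : (0 < m`! * m`! * (n - (2 * m))`!)%N by rewrite !muln_gt0 !fact_gt0.
apply/eqP; rewrite -(eqn_pmul2r P0); apply/eqP.
have e1 := @bin_fact n m ltac:(lia).
have e2 := @bin_fact (n-m) m ltac:(lia).
have e3 := @bin_fact n ((2 * m)) h.
have e4 := @bin_fact ((2 * m)) m ltac:(lia).
have ee : (n - m - m = n - (2 * m))%N by lia.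
have ee2 : ((2 * m) - m = m)%N by lia.
rewrite ee in e2; rewrite ee2 in e4.
transitivity (n`!).
  rewrite -e1 -e2. ring.
rewrite -e3 -e4. ring.
Qed.



Lemma central_rec m : ('C((m.+1).*2, m.+1) * m.+1 = 2 * (m.*2.+1) * 'C(m.*2, m))%N.
Proof.
have f1 := @bin_fact m.*2 m ltac:(lia).
have f2 := @bin_fact (m.+1).*2 m.+1 ltac:(lia).
have e1 : (m.*2 - m = m)%N by lia. rewrite e1 in f1.
have e2 : ((m.+1).*2 - m.+1 = m.+1)%N by lia. rewrite e2 in f2.
have e : ((m.+1).*2)`! = (m.*2.+2 * m.*2.+1 * (m.*2)`!)%N.
  by rewrite doubleS !factS mulnA.
rewrite e -f1 !factS in f2.
have P : (0 < m.+1 * m`! * m`!)%N by rewrite !muln_gt0 !fact_gt0.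
apply/eqP; rewrite -(eqn_pmul2r P); apply/eqP.
idtac.
move: f2. set A := 'C(_, _). set B := 'C(_, _).
move=> f2.
transitivity (A * (m.+1 * m`! * (m.+1 * m`!)))%N; first ring.
rewrite f2 -!mul2n; ring.
Qed.

Lemma central_bound m : (16^m.+1 <= 4 * m.+1 * 'C((m.+1).*2, m.+1)^2)%N.
Proof.
elim: m => [|m IH]; first by [].
set C := 'C((m.+1).*2, m.+1) in IH.
have e := central_rec m.+1.
rewrite -/C in e.
set D := 'C(_, _) in e *.
rewrite -(@leq_pmul2r m.+2) //.
have -> : (4 * m.+2 * D ^ 2 * m.+2 = 4 * (D * m.+2)^2)%N by ring.
rewrite e expnS.
have h : (4 * m.+1 * m.+2 <= (m.+1.*2.+1)^2)%N by nia.
have -> : (4 * (2 * (m.+1).*2.+1 * C) ^ 2 = 16 * ((m.+1).*2.+1)^2 * C^2)%N by ring.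
rewrite -!mulnA leq_pmul2l //.
apply: leq_trans (_ : 4 * m.+1 * C^2 * m.+2 <= _)%N.
  by rewrite leq_pmul2r.
have -> : (4 * m.+1 * C ^ 2 * m.+2 = (4 * m.+1 * m.+2) * C^2)%N by ring.
by rewrite mulnA mulnn; apply: leq_mul.
Qed.

Lemma ffact_le n m : (n^_m <= n^m)%N.
Proof.
elim: m n => [|m IH] n; first by [].
rewrite ffactnS expnS; apply: leq_mul => //.
apply: leq_trans (IH _) _.
case: m {IH} => [|m]; first by [].
by rewrite leq_exp2r // leq_pred.
Qed.


Definition Sm n m : {set {set 'I_n}} := [set U : {set 'I_n} | #|U| == m].
Definition S2 n m : {set {set 'I_n}} := [set U : {set 'I_n} | #|U| == (2 * m)%N].
Definition uval n m (i : 'I_#|Sm n m|) : {set 'I_n} := enum_val i.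
Definition Zpl n m (k : 'I_#|Sm n m|) : {set 'I_#|Sm n m|} :=
  [set f : 'I_#|Sm n m| | ~~ [disjoint (uval f) & (uval k)]].

Lemma uval_inj n m : injective (@uval n m).
Proof. exact: enum_val_inj. Qed.

Lemma uvalP n m (i : 'I_#|Sm n m|) : uval i \in Sm n m.
Proof. exact: enum_valP. Qed.

Lemma Sm_rk n m T (TP : T \in Sm n m) : uval (enum_rank_in TP T) = T.
Proof. by rewrite /uval enum_rankK_in. Qed.

Lemma card_Sm n m : #|Sm n m| = 'C(n, m).
Proof. by rewrite /Sm card_draws card_ord. Qed.

Lemma card_Z n m (k : 'I_#|Sm n m|) : #|Zpl k| = ('C(n, m) - 'C(n - m, m))%N.
Proof.
set U := uval k.
have UP : U \in Sm n m := uvalP k.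
have : #|~: Zpl k| = 'C(n - m, m).
  have -> : ~: Zpl k = [set f | [disjoint (uval f) & U]].
    by apply/setP => f; rewrite !inE negbK.
  rewrite -(card_imset _ (@uval_inj n m)).
  have -> : [set uval x | x in [set f : 'I_#|Sm n m| | [disjoint (uval f) & U]]]
     = [set T : {set 'I_n} | T \subset ~: U & #|T| == m].
    apply/setP => T; rewrite inE; apply/imsetP/idP.
      case=> f; rewrite inE => Hd ->.
      have := uvalP f; rewrite inE => ->.
      by rewrite -disjoints_subset Hd.
    case/andP => Hs Hc.
    have TP : T \in Sm n m by rewrite inE.
    exists (enum_rank_in TP T); last by rewrite Sm_rk.
    by rewrite inE Sm_rk disjoints_subset.
  rewrite cards_draws.
  have hc : #|~: U| = (n - m)%N.
    have := cardsC U; rewrite card_ord.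
    move: UP; rewrite inE => /eqP ->; lia.
  by rewrite hc.
move=> h2.
have := cardsC (Zpl k); rewrite card_ord h2.
have := card_Sm n m; lia.
Qed.

Definition S2val n m (j : 'I_#|S2 n m|) : {set 'I_n} := enum_val j.

Lemma S2rk n m S (SP : S \in S2 n m) : S2val (enum_rank_in SP S) = S.
Proof. by rewrite /S2val enum_rankK_in. Qed.

Lemma scheme_ok n m : (0 < m)%N -> (2 * m <= n)%N ->
  caching_scheme #|S2 n m| (@Zpl n m).
Proof.
move=> m0 mn N A KN.
have K0 : (0 < #|Sm n m|)%N by rewrite card_Sm bin_gt0; lia.
pose k0 : 'I_#|Sm n m| := Ordinal K0.
pose rk := enum_rank_in (uvalP k0).
have rkK : forall T, T \in Sm n m -> uval (rk T) = T.
  by move=> T TP; rewrite /rk /uval enum_rankK_in.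
have rkV : forall k, rk (uval k) = k.
  by move=> k; rewrite /rk /uval enum_valK_in.
exists (fun d j W => nth (W (d k0) k0) (enum A)
  ((\sum_(U in Sm n m | U \subset S2val j)
      index (W (d (rk U)) (rk (S2val j :\: U))) (enum A)) %% #|A|)).
move=> d k W W' Hc Ht f.
case: (boolP (f \in Zpl k)) => fZ; first exact: Hc.
move: fZ; rewrite inE negbK => Hdis.
set U := uval k in Hdis *; set Tf := uval f in Hdis *.
have UP : U \in Sm n m := uvalP k.
have TP : Tf \in Sm n m := uvalP f.
have Uc : #|U| = m by move: UP; rewrite inE => /eqP.
have Tc : #|Tf| = m by move: TP; rewrite inE => /eqP.
set S := Tf :|: U.
have SP : S \in S2 n m.
  have e0 : Tf :&: U = set0 by apply/eqP; rewrite setI_eq0.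
  by rewrite inE cardsU e0 cards0 Uc Tc subn0 mul2n addnn.
have A0 : (0 < #|A|)%N by apply/card_gt0P; exists (W (d k) f).
have ix : forall a : A, (index a (enum A) < #|A|)%N.
  by move=> a; rewrite cardE index_mem mem_enum.
have Hsum : forall W0 : library N #|Sm n m| A,
  \sum_(U' in Sm n m | U' \subset S) index (W0 (d (rk U')) (rk (S :\: U'))) (enum A)
  = (index (W0 (d k) f) (enum A) +
     \sum_(U' | ((U' \in Sm n m) && (U' \subset S)) && (U' != U))
        index (W0 (d (rk U')) (rk (S :\: U'))) (enum A))%N.
  move=> W0; rewrite (bigD1 U) /=; last by rewrite UP subsetUr.
  have -> : S :\: U = Tf by rewrite /S setDUl setDv setU0; apply/setDidPl.
  by rewrite rkV /Tf rkV.
have Hrest : \sum_(U' | ((U' \in Sm n m) && (U' \subset S)) && (U' != U))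
        index (W (d (rk U')) (rk (S :\: U'))) (enum A) =
   \sum_(U' | ((U' \in Sm n m) && (U' \subset S)) && (U' != U))
        index (W' (d (rk U')) (rk (S :\: U'))) (enum A).
  apply: eq_bigr => U' /andP[/andP[U'P U'S] U'ne]; congr index; apply: Hc.
  have U'c : #|U'| = m by move: U'P; rewrite inE => /eqP.
  have SDP : S :\: U' \in Sm n m.
    rewrite inE cardsD (setIidPr U'S).
    move: SP; rewrite inE => /eqP ->; rewrite U'c; apply/eqP; lia.
  rewrite inE rkK //.
  have : ~~ (U \subset U').
    apply/negP => sub.
    have := (subset_leqif_cards sub).2; rewrite Uc U'c eqxx => /esym/eqP E.
    by move: U'ne; rewrite E eqxx.
  case/subsetPn => x xU xnU'.
  have xS : x \in S :\: U' by rewrite in_setD xnU' /= in_setU xU orbT.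
  by apply/negP => Hd; have := disjointFr Hd xS; rewrite xU.
move/(_ (enum_rank_in SP S)): Ht; rewrite S2rk.
have nthD : forall a b i, (i < #|A|)%N -> nth a (enum A) i = nth b (enum A) i.
  by move=> a b i; rewrite cardE => h; apply: set_nth_default.
rewrite (nthD (W (d k0) k0) (W (d k) f)) ?ltn_pmod //.
rewrite (nthD (W' (d k0) k0) (W (d k) f)) ?ltn_pmod //.
move/eqP; rewrite nth_uniq ?enum_uniq -?cardE ?ltn_pmod //.
rewrite !Hsum Hrest eqn_modDr !modn_small ?ix // => /eqP E.
by rewrite -(nth_index (W (d k0) k0) (mem_enum A (W (d k) f))) E nth_index ?mem_enum.
Qed.

Local Open Scope ring_scope.

(* lambda * q = m (a positive integer), so q^(2 lambda^2 q^2) = q^(2 m^2). *)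
Theorem corollary2 (q : nat) (lambda : R) (m : nat) :
  prime_power q ->
  0 < lambda -> lambda < 1 ->
  (0 < m)%N -> lambda * q%:R = m%:R ->
  exists (K T : nat) (Z : 'I_K -> {set 'I_K}) (mu : R),
    caching_scheme T Z /\
    cache_fraction_ok Z mu /\
    0 <= mu /\ mu <= lambda /\
    (K%:R : R) <= q%:R ^+ (2 * m ^ 2) / (m`!)%:R /\
    gain K K T mu >= 4%:R ^+ m / (2%:R * Num.sqrt (m%:R : R)).
Proof.
move=> _ l0 l1 m0 hl.
have q0 : (0 < q)%N.
  case: q hl => [|q'] //; rewrite mulr0 => /eqP; rewrite eq_sym pnatr_eq0; lia.
have mq : (m < q)%N.
  rewrite -(ltr_nat R) -hl -[X in _ < X]mul1r ltr_pM2r // ltr0n //.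
pose n := (m * q)%N.
have mn : (2 * m <= n)%N by rewrite /n; nia.
have Kp : (0 < 'C(n, m))%N by rewrite bin_gt0; lia.
have Tp : (0 < 'C(n, 2 * m))%N by rewrite bin_gt0.
have DK : ('C(n - m, m) <= 'C(n, m))%N by apply: leq_bin2l; apply: leq_subr.
have KR : (0 : R) < ('C(n, m))%:R by rewrite ltr0n.
have TR : (0 : R) < ('C(n, 2 * m))%:R by rewrite ltr0n.
exists #|Sm n m|, #|S2 n m|, (@Zpl n m), (1 - ('C(n - m, m))%:R / ('C(n, m))%:R).
split; first exact: scheme_ok.
split.
  move=> k; rewrite card_Z card_Sm natrB //.
  by rewrite mulrBl mul1r divfK ?gt_eqF.
split.
  by rewrite subr_ge0 ler_pdivrMr // mul1r ler_nat.
split.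
  have -> : lambda = m%:R / q%:R by rewrite -hl mulfK // pnatr_eq0 -lt0n.
  have H : (q * ('C(n, m) - 'C(n - m, m)) <= m * 'C(n, m))%N.
    have hc := bin_cov (n - m) m m.-1.
    rewrite prednK // in hc.
    have e1 : (n - m + m = n)%N by lia.
    rewrite e1 in hc.
    have hd := mul_bin_diag n m.-1.
    rewrite prednK // in hd.
    have e2 : (q * 'C(n.-1, m.-1) = 'C(n, m))%N.
      apply/eqP; rewrite -(eqn_pmul2l m0); apply/eqP.
      by rewrite -hd /n; ring.
    nia.
  have -> : 1 - ('C(n - m, m))%:R / ('C(n, m))%:R =
            ('C(n, m) - 'C(n - m, m))%:R / ('C(n, m))%:R :> R.
    by rewrite natrB // mulrBl divff ?gt_eqF.
  rewrite ler_pdivrMr // mulrAC ler_pdivlMr ?ltr0n //.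
  by rewrite -!natrM ler_nat mulnC.
split.
  rewrite card_Sm ler_pdivlMr ?ltr0n ?fact_gt0 // -natrM -natrX ler_nat.
  rewrite bin_ffact.
  apply: leq_trans (ffact_le _ _) _.
  apply: leq_trans (_ : (q ^ 2) ^ m <= _)%N.
    by rewrite leq_exp2r // /n expnS expn1 leq_mul2r; apply/orP; right; apply: ltnW.
  rewrite -expnM; apply: leq_pexp2l => //; nia.
rewrite /gain /rate card_Sm.
have -> : ('C(n, m))%:R * (1 - (1 - ('C(n - m, m))%:R / ('C(n, m))%:R)) /
   (#|S2 n m|%:R / ('C(n, m))%:R) = ('C(2 * m, m))%:R :> R.
  have -> : #|S2 n m| = 'C(n, 2 * m) by rewrite /S2 card_draws card_ord.
  have E : ('C(2 * m, m))%:R = ('C(n, m))%:R * ('C(n - m, m))%:R / ('C(n, 2 * m))%:R :> R.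
    by rewrite -natrM bin_mid // natrM mulrAC divff ?gt_eqF // mul1r.
  rewrite E subKr; field.
  by apply/andP; split; rewrite gt_eqF.
have cb := central_bound m.-1.
rewrite prednK // in cb.
have sq0 : (0 : R) < Num.sqrt (m%:R) by rewrite sqrtr_gt0 ltr0n.
rewrite ler_pdivrMr ?mulr_gt0 ?ltr0n //.
rewrite -(ler_pXn2r (n:=2)) // ?nnegrE ?mulr_ge0 ?ler0n ?exprn_ge0 ?sqrtr_ge0 //.
rewrite !exprMn sqr_sqrtr ?ler0n // -!natrX -!natrM ler_nat.
rewrite -expnM mulnC expnM.
move: cb; rewrite -mul2n.
have -> : ('C(2 * m, m) ^ 2 * (2 ^ 2 * m) = 4 * m * 'C(2 * m, m) ^ 2)%N by ring.
by [].
Qed.
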